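(* For a polygonal knot $K$, $$MD(K) \geq \min\{2\,R(K),\,MinEdge(K)\}.$$
   Context: A polygonal knot $K$ with $n$ edges is given by distinct vertices $v_1,\dots,v_n\in\mathbb{R}^3$ (indices mod $n$), with edges $e_i=[v_i,v_{i+1}]$ meeting only at the common vertex of adjacent edges. $|e_i|$ is the length of $e_i$ and $MinEdge(K)=\min_i|e_i|$. $MD(K)$ is the minimum distance between non-adjacent edges of $K$. $angle(v_i)\in[0,\pi)$ is the turning angle at $v_i$ (angle between $v_i-v_{i-1}$ and $v_{i+1}-v_i$). Let $Rad(v_i)=\dfrac{\min\{|e_{i-1}|,|e_i|\}}{2\tan(angle(v_i)/2)}$ and $MinRad(K)=\min_i Rad(v_i)$. For $x\in K$ let $d_x(y)=\Vert x-y\Vert$ for $y\in K$. A point $y$ is a turning point for $x$ if, moving along the knot, $d_x$ changes from increasing to decreasing or from decreasing to increasing at $y$. Let $DC(K)$ be the set of pairs $(x,y)$, $x\neq y$, with $x$ a turning point of $d_y$ and $y$ a turning point of $d_x$, and $dcsd(K)=\min\{\Vert x-y\Vert:(x,y)\in DC(K)\}$. The polygonal thickness radius is $R(K)=\min\{MinRad(K),dcsd(K)/2\}$. *)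

(* Defs.v *)
From Stdlib Require Import Reals Lra Lia ZArith List.
From Coquelicot Require Import Coquelicot.
Open Scope R_scope.

Definition pt : Type := (R * R * R)%type.
Definition padd (a b : pt) : pt :=
  let '(a1, a2, a3) := a in let '(b1, b2, b3) := b in (a1 + b1, a2 + b2, a3 + b3).
Definition psub (a b : pt) : pt :=
  let '(a1, a2, a3) := a in let '(b1, b2, b3) := b in (a1 - b1, a2 - b2, a3 - b3).
Definition pscal (t : R) (a : pt) : pt :=
  let '(a1, a2, a3) := a in (t * a1, t * a2, t * a3).
Definition pdot (a b : pt) : R :=
  let '(a1, a2, a3) := a in let '(b1, b2, b3) := b in a1 * b1 + a2 * b2 + a3 * b3.
Definition pnorm (a : pt) : R := sqrt (pdot a a).
Definition pdist (a b : pt) : R := pnorm (psub a b).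

(** A polygon with n edges is given by v : nat -> pt; only v 0, ..., v (n-1)
    matter, indices are taken mod n. *)
Definition V (n : nat) (v : nat -> pt) (i : nat) : pt := v (i mod n)%nat.

Definition on_seg (a b p : pt) : Prop :=
  exists t, 0 <= t <= 1 /\ p = padd a (pscal t (psub b a)).

Definition on_edge (n : nat) (v : nat -> pt) (i : nat) (p : pt) : Prop :=
  on_seg (V n v i) (V n v (S i)) p.

Definition edge_len (n : nat) (v : nat -> pt) (i : nat) : R :=
  pdist (V n v (S i)) (V n v i).

Definition adjacent (n : nat) (i j : nat) : Prop :=
  j = (S i mod n)%nat \/ i = (S j mod n)%nat.

Definition polygonal_knot (n : nat) (v : nat -> pt) : Prop :=
  (3 <= n)%nat /\
  (forall i j, (i < n)%nat -> (j < n)%nat -> i <> j -> v i <> v j) /\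
  (forall i j p, (i < n)%nat -> (j < n)%nat -> i <> j ->
     on_edge n v i p -> on_edge n v j p ->
     (j = (S i mod n)%nat /\ p = V n v j) \/ (i = (S j mod n)%nat /\ p = V n v i)).

Fixpoint min_list (l : list R) (d : R) : R :=
  match l with nil => d | x :: nil => x | x :: l' => Rmin x (min_list l' d) end.
Definition MinEdge (n : nat) (v : nat -> pt) : R :=
  min_list (map (edge_len n v) (seq 0 n)) 0.

(** MD(K): the minimum distance between non-adjacent edges (+oo if there
    are no non-adjacent edges), taken as a greatest lower bound. *)
Definition MD (n : nat) (v : nat -> pt) : Rbar :=
  Glb_Rbar (fun d => exists i j p q, (i < n)%nat /\ (j < n)%nat /\ i <> j /\
              ~ adjacent n i j /\ on_edge n v i p /\ on_edge n v j q /\ d = pdist p q).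

(** Turning angle at v_i, in [0, pi]: angle between v_i - v_{i-1} and
    v_{i+1} - v_i. *)
Definition turn_angle (n : nat) (v : nat -> pt) (i : nat) : R :=
  let a := psub (V n v i) (V n v (i + n - 1)) in
  let b := psub (V n v (S i)) (V n v i) in
  acos (pdot a b / (pnorm a * pnorm b)).

(** Rad(v_i) = min(|e_{i-1}|,|e_i|) / (2 tan(angle(v_i)/2));
    = +oo when the angle is 0 (division by tan 0 = 0). *)
Definition Rad (n : nat) (v : nat -> pt) (i : nat) : Rbar :=
  if Req_EM_T (turn_angle n v i) 0 then p_infty
  else Finite (Rmin (edge_len n v (i + n - 1)) (edge_len n v i)
               / (2 * tan (turn_angle n v i / 2))).

Definition MinRad (n : nat) (v : nat -> pt) : Rbar :=
  fold_right (fun i m => Rbar_min (Rad n v i) m) p_infty (seq 0 n).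

(** Arc-length-like parametrisation of the knot by t in R, periodic of
    period n: gamma(t) = v_i + (t - k)(v_{i+1} - v_i) with k = floor t,
    i = k mod n. *)
Definition gamma (n : nat) (v : nat -> pt) (t : R) : pt :=
  let k := Int_part t in
  let i := Z.to_nat (k mod Z.of_nat n)%Z in
  padd (V n v i) (pscal (t - IZR k) (psub (V n v (S i)) (V n v i))).

Definition turning_param (n : nat) (v : nat -> pt) (x : pt) (t : R) : Prop :=
  let f := fun u => pdist x (gamma n v u) in
  exists eps, 0 < eps /\
   (((forall a b, t - eps <= a -> a < b -> b <= t -> f a < f b) /\
     (forall a b, t <= a -> a < b -> b <= t + eps -> f b < f a)) \/
    ((forall a b, t - eps <= a -> a < b -> b <= t -> f b < f a) /\
     (forall a b, t <= a -> a < b -> b <= t + eps -> f a < f b))).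

Definition turning_pt (n : nat) (v : nat -> pt) (x y : pt) : Prop :=
  exists t, y = gamma n v t /\ turning_param n v x t.

Definition dcsd (n : nat) (v : nat -> pt) : Rbar :=
  Glb_Rbar (fun d => exists x y, x <> y /\ turning_pt n v y x /\ turning_pt n v x y
                                 /\ d = pdist x y).

Definition ThickR (n : nat) (v : nat -> pt) : Rbar :=
  Rbar_min (MinRad n v) (Rbar_mult (/ 2) (dcsd n v)).

(* Main.v *)
Require Import Defs.

From Stdlib Require Import Reals Lra Lia Psatz ZArith List Classical.
From Coquelicot Require Import Coquelicot.
Open Scope R_scope.

Ltac dpt p := let a := fresh "a" in let b := fresh "b" in let c := fresh "c" in destruct p as [[a b] c].

Lemma pdot_self_nonneg a : 0 <= pdot a a.
Proof. dpt a; simpl; nra. Qed.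

Lemma pnorm_nonneg a : 0 <= pnorm a.
Proof. apply sqrt_pos. Qed.

Lemma pdist_nonneg a b : 0 <= pdist a b.
Proof. apply sqrt_pos. Qed.

Lemma pdist_sym a b : pdist a b = pdist b a.
Proof. unfold pdist, pnorm. dpt a; dpt b; simpl. f_equal. ring. Qed.

Lemma cauchy_schwarz u w : pdot u w <= pnorm u * pnorm w.
Proof.
  unfold pnorm. destruct (Rle_dec (pdot u w) 0) as [H|H].
  - pose proof (sqrt_pos (pdot u u)); pose proof (sqrt_pos (pdot w w)); nra.
  - apply Rnot_le_lt in H. rewrite <- sqrt_mult by apply pdot_self_nonneg.
    rewrite <- (sqrt_square (pdot u w)) by lra.
    apply sqrt_le_1_alt. destruct u as [[u1 u2] u3]; destruct w as [[w1 w2] w3]; simpl.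
    pose proof (Rle_0_sqr (u1*w2 - u2*w1)); pose proof (Rle_0_sqr (u1*w3 - u3*w1)); pose proof (Rle_0_sqr (u2*w3-u3*w2)).
    unfold Rsqr in *. nra.
Qed.

Lemma sqrt_tri X U W : 0 <= U -> 0 <= W ->
  X <= U + W + 2 * (sqrt U * sqrt W) -> sqrt X <= sqrt U + sqrt W.
Proof.
  intros HU HW H.
  pose proof (sqrt_pos U); pose proof (sqrt_pos W).
  rewrite <- (sqrt_square (sqrt U + sqrt W)) by lra.
  apply sqrt_le_1_alt.
  pose proof (sqrt_sqrt U HU); pose proof (sqrt_sqrt W HW). nra.
Qed.

Lemma pdist_tri a b c : pdist a c <= pdist a b + pdist b c.
Proof.
  unfold pdist, pnorm. apply sqrt_tri; try apply pdot_self_nonneg.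
  pose proof (cauchy_schwarz (psub a b) (psub b c)) as H. unfold pnorm in H.
  revert H. dpt a; dpt b; dpt c; simpl. nra.
Qed.

Lemma pt_eq (a1 a2 a3 b1 b2 b3 : R) : a1 = b1 -> a2 = b2 -> a3 = b3 -> (a1,a2,a3) = (b1,b2,b3).
Proof. intros; subst; reflexivity. Qed.

Definition E (n : nat) (v : nat -> pt) (i : nat) (s : R) : pt :=
  padd (V n v i) (pscal s (psub (V n v (S i)) (V n v i))).

Lemma on_edge_E n v i p : on_edge n v i p <-> exists s, 0 <= s <= 1 /\ p = E n v i s.
Proof. reflexivity. Qed.

Lemma pdist_E n v i s s' : pdist (E n v i s) (E n v i s') = Rabs (s - s') * edge_len n v i.
Proof.
  unfold E, edge_len, pdist, pnorm. destruct (V n v i) as [[a b] c]. destruct (V n v (S i)) as [[d e] f].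
  simpl. rewrite <- sqrt_Rsqr_abs, <- sqrt_mult_alt by apply Rle_0_sqr.
  f_equal. unfold Rsqr. ring.
Qed.

Definition clamp01 (x : R) := Rmax 0 (Rmin 1 x).
Lemma clamp01_range x : 0 <= clamp01 x <= 1.
Proof. unfold clamp01, Rmax, Rmin. repeat destruct Rle_dec; lra. Qed.

Lemma quad_clamp ww w dd t : dd > 0 -> 0 <= t <= 1 ->
  ww - 2 * clamp01 (w / dd) * w + clamp01 (w/dd) * clamp01 (w/dd) * dd <= ww - 2 * t * w + t * t * dd.
Proof.
  intros Hd Ht. set (ts := w / dd). assert (Hw : w = ts * dd) by (unfold ts; field; lra).
  rewrite Hw. unfold clamp01, Rmax, Rmin. clearbody ts. clear Hw.
  repeat destruct Rle_dec; repeat match goal with H: ~ _ <= _ |- _ => apply Rnot_le_lt in H end.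
all: try nra.
all: first [ assert (0 <= dd*(1-t)) by (apply Rmult_le_pos; lra); assert (0 <= dd*(1-t)*(2*ts-1-t)) by (apply Rmult_le_pos; lra); nra
 | assert (0 <= dd*((t-ts)*(t-ts))) by (apply Rmult_le_pos; [lra| apply Rle_0_sqr]); nra
 | assert (0 <= dd*t) by (apply Rmult_le_pos; lra); assert (0 <= dd*t*(t-2*ts)) by (apply Rmult_le_pos; lra); nra].
Qed.

Definition tproj (P A D : pt) := clamp01 (pdot (psub P A) D / pdot D D).

Lemma pdot_pos_neq a b : a <> b -> pdot (psub a b) (psub a b) > 0.
Proof.
  intro H. destruct (Rle_dec (pdot (psub a b) (psub a b)) 0) as [H1|H1]; [|lra].
  exfalso; apply H. revert H1. destruct a as [[a1 a2] a3]; destruct b as [[b1 b2] b3]; simpl. intro H1.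
  pose proof (Rle_0_sqr (a1-b1)); pose proof (Rle_0_sqr (a2-b2)); pose proof (Rle_0_sqr (a3-b3)). unfold Rsqr in *.
  assert ((a1-b1)*(a1-b1) = 0) as E1 by lra. assert ((a2-b2)*(a2-b2) = 0) as E2 by lra. assert ((a3-b3)*(a3-b3) = 0) as E3 by lra.
  apply Rmult_integral in E1; apply Rmult_integral in E2; apply Rmult_integral in E3.
  apply pt_eq; lra.
Qed.

Lemma tproj_min P A D t : pdot D D > 0 -> 0 <= t <= 1 ->
  pdist P (padd A (pscal (tproj P A D) D)) <= pdist P (padd A (pscal t D)).
Proof.
  intros Hd Ht. unfold pdist, pnorm. apply sqrt_le_1_alt. unfold tproj.
  pose proof (quad_clamp (pdot (psub P A) (psub P A)) (pdot (psub P A) D) (pdot D D) t Hd Ht) as H.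
  set (c := clamp01 _) in *. clearbody c. revert H. dpt P; dpt A; dpt D; simpl. intro H. nra.
Qed.

Lemma lip_cont (h : R -> R) K : 0 <= K -> (forall s s', Rabs (h s - h s') <= K * Rabs (s - s')) ->
  forall s, continuity_pt h s.
Proof.
  intros HK H s eps Heps. exists (eps / (K + 1)). split.
  - apply Rdiv_lt_0_compat; lra.
  - intros x [_ Hx]. simpl in *. unfold R_dist in *.
    eapply Rle_lt_trans; [apply H|].
    apply Rle_lt_trans with (K * (eps / (K+1))).
    + apply Rmult_le_compat_l; lra.
    + apply Rmult_lt_reg_r with (K+1); [lra|]. field_simplify; [nra|lra].
Qed.

Lemma E_form n v j t : E n v j t = padd (V n v j) (pscal t (psub (V n v (S j)) (V n v j))).
Proof. reflexivity. Qed.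

Lemma min2 n v i j : V n v (S j) <> V n v j ->
  exists s0 t0, 0 <= s0 <= 1 /\ 0 <= t0 <= 1 /\
   forall s t, 0 <= s <= 1 -> 0 <= t <= 1 -> pdist (E n v i s0) (E n v j t0) <= pdist (E n v i s) (E n v j t).
Proof.
  intro Hnd. pose proof (pdot_pos_neq _ _ Hnd) as Hd.
  set (D := psub (V n v (S j)) (V n v j)) in *.
  set (tp := fun s => tproj (E n v i s) (V n v j) D).
  set (h := fun s => pdist (E n v i s) (E n v j (tp s))).
  assert (Hh : forall s t, 0 <= t <= 1 -> h s <= pdist (E n v i s) (E n v j t)).
  { intros s t Ht. unfold h, tp. rewrite !E_form. fold D. apply tproj_min; auto. }
  assert (Htp : forall s, 0 <= tp s <= 1) by (intro; apply clamp01_range).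
  assert (Hc : forall s, continuity_pt h s).
  { apply lip_cont with (edge_len n v i). apply pdist_nonneg.
    assert (L : forall s s', h s - h s' <= edge_len n v i * Rabs (s - s')).
    { intros s s'. pose proof (Hh s (tp s') (Htp s')).
      pose proof (pdist_tri (E n v i s) (E n v i s') (E n v j (tp s'))).
      rewrite pdist_E in H0. unfold h at 2. nra. }
    intros s s'. apply Rabs_le. split.
    - pose proof (L s' s). rewrite Rabs_minus_sym in H. lra.
    - apply L. }
  destruct (continuity_ab_min h 0 1 ltac:(lra) (fun c _ => Hc c)) as [s0 [Hm Hs0]].
  exists s0, (tp s0). split; [auto|split; [auto|]].
  intros s t Hs Ht. change (h s0 <= pdist (E n v i s) (E n v j t)).
  apply Rle_trans with (h s); [apply Hm; auto|]. apply Hh; auto.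
Qed.

Lemma V_eq n v a b : (a mod n = b mod n)%nat -> V n v a = V n v b.
Proof. unfold V; intros ->; reflexivity. Qed.

Lemma V_mod n v a : V n v (a mod n) = V n v a.
Proof. apply V_eq. apply Nat.Div0.mod_mod. Qed.

Lemma mod_eq_of n a b q : (0 < n)%nat -> (b < n)%nat -> (a = q * n + b)%nat -> (a mod n = b)%nat.
Proof. intros Hn Hb ->. rewrite Nat.Div0.add_mod, Nat.Div0.mod_mul, Nat.add_0_l, Nat.Div0.mod_mod. apply Nat.mod_small; auto. Qed.

Lemma Smod_cases n r : (r < n)%nat -> ((S r < n)%nat /\ (S r mod n = S r)%nat) \/ (S r = n /\ (S r mod n = 0)%nat).
Proof.
  intro H. destruct (Nat.eq_dec (S r) n) as [E|E].
  - right. split; auto. apply (mod_eq_of n _ _ 1); lia.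
  - left. split; [lia|]. apply (mod_eq_of n _ _ 0); lia.
Qed.

Lemma S_mod n k : (0 < n)%nat -> (S k mod n = S (k mod n) mod n)%nat.
Proof. intros. replace (S k) with (k + 1)%nat by lia. replace (S (k mod n)) with (k mod n + 1)%nat by lia.
  rewrite Nat.Div0.add_mod_idemp_l. reflexivity. Qed.

Lemma mod_lt n k : (0 < n)%nat -> (k mod n < n)%nat.
Proof. intros; apply Nat.mod_upper_bound; lia. Qed.

Definition good (n i j : nat) := (i < n)%nat /\ (j < n)%nat /\ i <> j /\ ~ adjacent n i j.

Lemma knot_nondeg n v m : polygonal_knot n v -> V n v (S m) <> V n v m.
Proof.
  intros [H3 [Hd _]]. unfold V. apply Hd; try (apply mod_lt; lia).
  rewrite S_mod by lia. pose proof (mod_lt n m ltac:(lia)).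
  destruct (Smod_cases n (m mod n) H) as [[_ ->]|[E ->]]; lia.
Qed.

Lemma knot_disj n v i j p : polygonal_knot n v -> good n i j -> on_edge n v i p -> on_edge n v j p -> False.
Proof.
  intros [_ [_ Hk]] [Hi [Hj [Hij Ha]]] H1 H2.
  destruct (Hk i j p Hi Hj Hij H1 H2) as [[E _]|[E _]]; apply Ha; unfold adjacent; auto.
Qed.

Definition PD n v (x : nat * nat * R * R) : R :=
  let '(i, j, s, t) := x in pdist (E n v i s) (E n v j t).
Definition Adm n (x : nat * nat * R * R) : Prop :=
  let '(i, j, s, t) := x in good n i j /\ 0 <= s <= 1 /\ 0 <= t <= 1.

Lemma gmin_list n v (L : list (nat * nat)) : (forall m, V n v (S m) <> V n v m) ->
  (exists i j, In (i, j) L /\ good n i j) ->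
  exists x, Adm n x /\ forall i j s t, In (i,j) L -> Adm n (i,j,s,t) -> PD n v x <= PD n v (i,j,s,t).
Proof.
  intros Hnd. induction L as [|[i j] L IH]; intros [i0 [j0 [Hin Hg]]].
  - destruct Hin.
  - destruct (min2 n v i j (Hnd j)) as [s0 [t0 [Hs0 [Ht0 Hm]]]].
    destruct (classic (exists i j, In (i, j) L /\ good n i j)) as [HL|HL].
    + destruct (IH HL) as [x [Hx Hxm]].
      destruct (classic (good n i j)) as [Hg'|Hg'].
      * destruct (Rle_dec (PD n v x) (PD n v (i,j,s0,t0))) as [Hc|Hc].
        -- exists x. split; auto. intros i' j' s t [E|Hin'] Ha.
           ++ inversion E; subst. destruct Ha as [_ [Hs Ht]]. eapply Rle_trans; [apply Hc|]. apply Hm; auto.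
           ++ apply Hxm; auto.
        -- exists (i,j,s0,t0). split; [exact (conj Hg' (conj Hs0 Ht0))|]. intros i' j' s t [E|Hin'] Ha.
           ++ inversion E; subst. destruct Ha as [_ [Hs Ht]]. apply Hm; auto.
           ++ eapply Rle_trans; [|apply Hxm; eauto]. apply Rnot_le_lt in Hc. lra.
      * exists x. split; auto. intros i' j' s t [E|Hin'] Ha.
        -- inversion E; subst. exfalso; apply Hg'; apply Ha.
        -- apply Hxm; auto.
    + destruct Hin as [E|Hin].
      * inversion E; subst. exists (i0,j0,s0,t0). split; [exact (conj Hg (conj Hs0 Ht0))|].
        intros i' j' s t [E'|Hin'] Ha.
        -- inversion E'; subst. destruct Ha as [_ [Hs Ht]]. apply Hm; auto.
        -- exfalso; apply HL. exists i', j'. split; auto. apply Ha.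
      * exfalso; apply HL; eauto.
Qed.

Fixpoint allpairs (n : nat) (l : list nat) : list (nat * nat) :=
  match l with nil => nil | i :: l' => map (fun j => (i, j)) (seq 0 n) ++ allpairs n l' end.

Lemma allpairs_in n l i j : In i l -> (j < n)%nat -> In (i, j) (allpairs n l).
Proof.
  induction l as [|a l IH]; simpl; [tauto|]. intros [->|H] Hj; apply in_or_app.
  - left. apply in_map. apply in_seq. lia.
  - right. auto.
Qed.

Lemma gmin n v : polygonal_knot n v ->
  (exists i j s t, Adm n (i,j,s,t)) ->
  exists x, Adm n x /\ forall i j s t, Adm n (i,j,s,t) -> PD n v x <= PD n v (i,j,s,t).
Proof.
  intros Hk [i [j [s [t Ha]]]].
  destruct (gmin_list n v (allpairs n (seq 0 n)) (fun m => knot_nondeg n v m Hk)) as [x [Hx Hm]].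
  - exists i, j. split; [|apply Ha]. destruct Ha as [[Hi [Hj _]] _]. apply allpairs_in; auto. apply in_seq; lia.
  - exists x. split; auto. intros i' j' s' t' Ha'. apply Hm; auto.
    destruct Ha' as [[Hi [Hj _]] _]. apply allpairs_in; auto. apply in_seq; lia.
Qed.

Lemma Int_part_eq r k : IZR k <= r < IZR k + 1 -> Int_part r = k.
Proof.
  intros [H1 H2]. destruct (base_Int_part r) as [B1 B2].
  assert (Int_part r < k + 1)%Z by (apply lt_IZR; rewrite plus_IZR; simpl; lra).
  assert (k - 1 < Int_part r)%Z by (apply lt_IZR; rewrite minus_IZR; simpl; lra).
  lia.
Qed.

Lemma gamma_on n v m u : (0 < n)%nat -> INR m <= u <= INR m + 1 -> gamma n v u = E n v m (u - INR m).
Proof.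
  intros Hn [H1 H2]. unfold gamma.
  destruct (Rlt_dec u (INR m + 1)) as [Hl|Hl].
  - rewrite (Int_part_eq u (Z.of_nat m)) by (rewrite <- INR_IZR_INZ; lra).
    rewrite <- Nat2Z.inj_mod, Nat2Z.id, <- INR_IZR_INZ. unfold E.
    rewrite V_mod. rewrite (V_eq n v (S (m mod n)) (S m)); [reflexivity|].
    rewrite <- S_mod by lia. reflexivity.
  - assert (u = INR (S m)) by (rewrite S_INR; lra). subst u.
    rewrite (Int_part_eq _ (Z.of_nat (S m))) by (rewrite <- INR_IZR_INZ; lra).
    rewrite <- Nat2Z.inj_mod, Nat2Z.id, <- INR_IZR_INZ. unfold E.
    rewrite V_mod. rewrite (V_eq n v (S (S m mod n)) (S (S m))) by (rewrite <- S_mod by lia; reflexivity).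
    rewrite S_INR. replace (INR m + 1 - INR m) with 1 by ring. replace (INR (S m) - INR (S m)) with 0 by ring.
    destruct (V n v (S m)) as [[a b] c]; destruct (V n v m) as [[d e] f]; destruct (V n v (S (S m))) as [[g h] i].
    simpl. apply pt_eq; ring.
Qed.

Lemma quad_strict (Q : R -> R) al be ga lo hi t : ga > 0 -> (forall u, Q u = al + be * u + ga * (u * u)) ->
  lo <= t <= hi -> (forall u, lo <= u <= hi -> Q t <= Q u) ->
  (forall a b, lo <= a -> a < b -> b <= t -> Q b < Q a) /\ (forall a b, t <= a -> a < b -> b <= hi -> Q a < Q b).
Proof.
  intros Hg HQ Ht Hm. split.
  - intros a b Ha Hab Hb. pose proof (Hm ((a+t)/2) ltac:(lra)) as H. rewrite !HQ in *.
    assert (X : be + ga * ((a+t)/2 + t) <= 0).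
    { destruct (Rle_dec (be + ga * ((a+t)/2 + t)) 0) as [?|N]; auto. apply Rnot_le_lt in N.
      exfalso. assert (0 < (t - (a+t)/2) * (be + ga * ((a+t)/2 + t))) by (apply Rmult_lt_0_compat; lra). nra. }
    assert (Y : be + ga * (a + b) < 0).
    { assert (ga * (a + b) < ga * ((a+t)/2 + t)) by (apply Rmult_lt_compat_l; lra). lra. }
    assert (0 < (b - a) * (-(be + ga * (a + b)))) by (apply Rmult_lt_0_compat; lra). nra.
  - intros a b Ha Hab Hb. pose proof (Hm ((b+t)/2) ltac:(lra)) as H. rewrite !HQ in *.
    assert (X : 0 <= be + ga * ((b+t)/2 + t)).
    { destruct (Rle_dec 0 (be + ga * ((b+t)/2 + t))) as [?|N]; auto. apply Rnot_le_lt in N.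
      exfalso. assert (0 < ((b+t)/2 - t) * (-(be + ga * ((b+t)/2 + t)))) by (apply Rmult_lt_0_compat; lra). nra. }
    assert (Y : 0 < be + ga * (a + b)).
    { assert (ga * ((b+t)/2 + t) < ga * (a + b)) by (apply Rmult_lt_compat_l; lra). lra. }
    assert (0 < (b - a) * (be + ga * (a + b))) by (apply Rmult_lt_0_compat; lra). nra.
Qed.

Definition Qf (c A D : pt) (k u : R) := pdot (psub c (padd A (pscal (u - k) D))) (psub c (padd A (pscal (u - k) D))).

Lemma Qf_quad c A D k : exists al be ga, ga = pdot D D /\ forall u, Qf c A D k u = al + be * u + ga * (u * u).
Proof.
  destruct c as [[c1 c2] c3]; destruct A as [[a1 a2] a3]; destruct D as [[d1 d2] d3].
  set (w1 := c1 - a1 + k * d1); set (w2 := c2 - a2 + k * d2); set (w3 := c3 - a3 + k * d3).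
  exists (w1*w1+w2*w2+w3*w3), (-2*(w1*d1+w2*d2+w3*d3)), (d1*d1+d2*d2+d3*d3). split; [reflexivity|].
  intro u. unfold Qf, w1, w2, w3. simpl. ring.
Qed.

Lemma pdist_E_Qf n v c m u : pdist c (E n v m (u - INR m)) = sqrt (Qf c (V n v m) (psub (V n v (S m)) (V n v m)) (INR m) u).
Proof. reflexivity. Qed.

Lemma side_strict n v c t lo hi m : (0 < n)%nat -> (forall m, V n v (S m) <> V n v m) ->
  INR m <= lo -> lo <= t <= hi -> hi <= INR m + 1 ->
  (forall u, lo <= u <= hi -> pdist c (gamma n v t) <= pdist c (gamma n v u)) ->
  (forall a b, lo <= a -> a < b -> b <= t -> pdist c (gamma n v b) < pdist c (gamma n v a)) /\
  (forall a b, t <= a -> a < b -> b <= hi -> pdist c (gamma n v a) < pdist c (gamma n v b)).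
Proof.
  intros Hn Hnd H1 H2 H3 Hm.
  set (Q := Qf c (V n v m) (psub (V n v (S m)) (V n v m)) (INR m)).
  assert (Hg : forall u, lo <= u <= hi -> pdist c (gamma n v u) = sqrt (Q u)).
  { intros u Hu. rewrite (gamma_on n v m u Hn) by lra. reflexivity. }
  assert (HQ0 : forall u, 0 <= Q u) by (intro; apply pdot_self_nonneg).
  destruct (Qf_quad c (V n v m) (psub (V n v (S m)) (V n v m)) (INR m)) as [al [be [ga [Hga HQ]]]].
  assert (ga > 0) by (rewrite Hga; apply pdot_pos_neq; auto).
  destruct (quad_strict Q al be ga lo hi t H HQ H2) as [L R].
  { intros u Hu. apply sqrt_le_0; auto. rewrite <- !Hg by lra. apply Hm; auto. }
  split.
  - intros a b Ha Hab Hb. rewrite !Hg by lra. apply sqrt_lt_1; auto.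
  - intros a b Ha Hab Hb. rewrite !Hg by lra. apply sqrt_lt_1; auto.
Qed.

Lemma turning_min n v c t eps mL mR : (0 < n)%nat -> (forall m, V n v (S m) <> V n v m) -> 0 < eps ->
  INR mL <= t - eps -> t <= INR mL + 1 -> INR mR <= t -> t + eps <= INR mR + 1 ->
  (forall u, t - eps <= u <= t + eps -> pdist c (gamma n v t) <= pdist c (gamma n v u)) ->
  turning_param n v c t.
Proof.
  intros Hn Hnd He H1 H2 H3 H4 Hm. exists eps. split; auto. right. split.
  - destruct (side_strict n v c t (t - eps) t mL Hn Hnd) as [L _]; try lra.
    + intros u Hu; apply Hm; lra.
    + intros a b Ha Hab Hb. apply L; lra.
  - destruct (side_strict n v c t t (t + eps) mR Hn Hnd) as [_ R]; try lra.
    + intros u Hu; apply Hm; lra.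
    + intros a b Ha Hab Hb. apply R; lra.
Qed.

Lemma trig_part (L X c : R) : 0 <= L -> 0 <= X -> -1 <= c < 1 -> L * L * (1 + c) <= X * X * (1 - c) ->
  acos c <> 0 /\ 2 * (L / (2 * tan (acos c / 2))) <= X.
Proof.
  intros HL HX Hc Hq. pose proof (acos_bound c) as [B1 B2].
  assert (Hcos : cos (acos c) = c) by (apply cos_acos; lra).
  assert (Hne : acos c <> 0) by (intro E; rewrite E, cos_0 in Hcos; lra).
  split; auto.
  set (h := acos c / 2).
  assert (Hh : 0 < h <= PI / 2) by (unfold h; lra).
  assert (Hs : 0 < sin h) by (apply sin_gt_0; pose proof PI_RGT_0; lra).
  assert (Hco : 0 <= cos h) by (apply cos_ge_0; pose proof PI_RGT_0; lra).
  assert (C2 : c = 2 * cos h * cos h - 1) by (rewrite <- cos_2a_cos; unfold h; replace (2 * (acos c / 2)) with (acos c) by field; auto).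
  assert (S2 : c = 1 - 2 * sin h * sin h) by (rewrite <- cos_2a_sin; unfold h; replace (2 * (acos c / 2)) with (acos c) by field; auto).
  unfold tan. destruct (Req_dec (cos h) 0) as [Z|Z].
  - unfold Rdiv. rewrite Z, Rinv_0. rewrite Rmult_0_r, Rmult_0_r, Rinv_0. lra.
  - assert (Hco' : 0 < cos h) by lra.
    replace (2 * (L / (2 * (sin h / cos h)))) with (L * cos h / sin h) by (field; lra).
    apply Rmult_le_reg_r with (sin h); auto. unfold Rdiv. rewrite Rmult_assoc, Rinv_l, Rmult_1_r by lra.
    destruct (Rle_dec (L * cos h) (X * sin h)) as [?|N]; auto. apply Rnot_le_lt in N. exfalso.
    assert (0 <= X * sin h) by (apply Rmult_le_pos; lra).
    assert ((X * sin h) * (X * sin h) < (L * cos h) * (L * cos h)) by nra.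
    nra.
Qed.

Lemma core_geo (la lb ab X tau : R) : 0 < la -> 0 < lb -> Rabs ab <= la * lb -> 0 <= tau <= 1 -> 0 <= X ->
  X * X = la * la + 2 * tau * ab + tau * tau * (lb * lb) ->
  Rmin la lb <= X \/ (acos (ab / (la * lb)) <> 0 /\ 2 * (Rmin la lb / (2 * tan (acos (ab / (la * lb)) / 2))) <= X).
Proof.
  intros Ha Hb Hab Ht HX HXX.
  assert (Hl : 0 < la * lb) by nra.
  set (c := ab / (la * lb)).
  assert (Hc : ab = c * (la * lb)) by (unfold c; field; lra).
  assert (Hcb : -1 <= c <= 1).
  { rewrite Hc in Hab. unfold Rabs in Hab. destruct Rcase_abs in Hab; split; nra. }
  assert (HL : 0 <= Rmin la lb <= la) by (unfold Rmin; destruct Rle_dec; lra).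
  destruct (Rle_dec 0 c) as [Cp|Cn].
  - left. assert (la * la <= X * X) by (rewrite HXX, Hc; assert (0 <= tau * c * la * lb) by (apply Rmult_le_pos; [apply Rmult_le_pos; [apply Rmult_le_pos|]|]; lra); assert (0 <= tau * tau * (lb * lb)) by (apply Rmult_le_pos; nra); nra).
    assert (la <= X) by nra. lra.
  - apply Rnot_le_lt in Cn. right. apply trig_part; try lra.
    assert (A : X * X = (tau * lb + c * la) * (tau * lb + c * la) + la * la * (1 - c * c)) by (rewrite HXX, Hc; ring).
    assert (B : la * la * (1 - c * c) <= X * X) by (rewrite A; pose proof (Rle_0_sqr (tau * lb + c * la)); unfold Rsqr in *; lra).
    assert (Cc : la * la * (1 + c) <= la * la * (1 - c * c) * (1 - c)).
    { assert (0 <= la * la * (1 + c) * (c * c - c)) by (apply Rmult_le_pos; [apply Rmult_le_pos; nra|nra]). nra. }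
    assert (D : Rmin la lb * Rmin la lb * (1 + c) <= la * la * (1 + c)).
    { apply Rmult_le_compat_r; [lra|]. nra. }
    assert (la * la * (1 - c * c) * (1 - c) <= X * X * (1 - c)) by (apply Rmult_le_compat_r; lra).
    lra.
Qed.

Lemma cs_abs u w : Rabs (pdot u w) <= pnorm u * pnorm w.
Proof.
  unfold pnorm. rewrite <- sqrt_mult by apply pdot_self_nonneg.
  rewrite <- sqrt_Rsqr_abs. apply sqrt_le_1_alt. destruct u as [[u1 u2] u3]; destruct w as [[w1 w2] w3]; simpl.
  pose proof (Rle_0_sqr (u1*w2 - u2*w1)); pose proof (Rle_0_sqr (u1*w3 - u3*w1)); pose proof (Rle_0_sqr (u2*w3-u3*w2)).
  unfold Rsqr in *. nra.
Qed.

Lemma pnorm_pos a : pdot a a > 0 -> 0 < pnorm a.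
Proof. intro; apply sqrt_lt_R0; lra. Qed.

Lemma pnorm_sq a : pnorm a * pnorm a = pdot a a.
Proof. apply sqrt_sqrt, pdot_self_nonneg. Qed.

Lemma geo_vec (a b : pt) tau (rev : bool) : pdot a a > 0 -> pdot b b > 0 -> 0 <= tau <= 1 ->
  let X := pnorm (if rev then padd b (pscal tau a) else padd a (pscal tau b)) in
  let th := acos (pdot a b / (pnorm a * pnorm b)) in
  Rmin (pnorm a) (pnorm b) <= X \/ (th <> 0 /\ 2 * (Rmin (pnorm a) (pnorm b) / (2 * tan (th / 2))) <= X).
Proof.
  intros Ha Hb Ht X th.
  pose proof (pnorm_pos a Ha); pose proof (pnorm_pos b Hb).
  pose proof (cs_abs a b).
  assert (HX : 0 <= X) by apply pnorm_nonneg.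
  destruct rev.
  - assert (E : X * X = pnorm b * pnorm b + 2 * tau * pdot a b + tau * tau * (pnorm a * pnorm a)).
    { unfold X. rewrite !pnorm_sq. destruct a as [[a1 a2] a3]; destruct b as [[b1 b2] b3]; simpl; ring. }
    destruct (core_geo (pnorm b) (pnorm a) (pdot a b) X tau) as [H2|[H2 H3]]; auto.
    + rewrite Rmult_comm; auto.
    + left. rewrite Rmin_comm; auto.
    + right. unfold th. rewrite (Rmult_comm (pnorm a)), Rmin_comm. auto.
  - assert (E : X * X = pnorm a * pnorm a + 2 * tau * pdot a b + tau * tau * (pnorm b * pnorm b)).
    { unfold X. rewrite !pnorm_sq. destruct a as [[a1 a2] a3]; destruct b as [[b1 b2] b3]; simpl; ring. }
    apply (core_geo _ _ _ _ tau); auto.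
Qed.

Lemma min_list_le l d x : In x l -> min_list l d <= x.
Proof.
  induction l as [|a l IH]; simpl; [tauto|]. intros [->|H].
  - destruct l; [lra|]. apply Rmin_l.
  - destruct l; [destruct H|]. eapply Rle_trans; [apply Rmin_r|]. apply IH; auto.
Qed.

Lemma edge_len_mod n v k : (0 < n)%nat -> edge_len n v (k mod n) = edge_len n v k.
Proof. intro. unfold edge_len. rewrite V_mod. rewrite (V_eq n v (S (k mod n)) (S k)); auto. rewrite <- S_mod; auto. Qed.

Lemma MinEdge_le n v k : (0 < n)%nat -> MinEdge n v <= edge_len n v k.
Proof.
  intro. rewrite <- edge_len_mod by auto. apply min_list_le. apply in_map. apply in_seq.
  pose proof (mod_lt n k H). lia.
Qed.

Lemma MinRad_le n v k : (k < n)%nat -> Rbar_le (MinRad n v) (Rad n v k).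
Proof.
  intro Hk. unfold MinRad. assert (In k (seq 0 n)) by (apply in_seq; lia).
  revert H. generalize (seq 0 n). induction l as [|a l IH]; simpl; [tauto|]. intros [->|H].
  - apply Rbar_min_l.
  - eapply Rbar_le_trans; [apply Rbar_min_r|]. auto.
Qed.

Lemma Rbar_mult_le_fin k T r : 0 < k -> Rbar_le T (Finite r) -> Rbar_le (Rbar_mult k T) (Finite (k * r)).
Proof.
  intros Hk H. destruct T as [t| |]; simpl in H.
  - simpl. nra.
  - destruct H.
  - unfold Rbar_mult, Rbar_mult'. destruct (Rle_dec 0 k) as [H1|H1]; [|lra].
    destruct (Rle_lt_or_eq_dec 0 k H1); [simpl; auto|lra].
Qed.

Definition Final n v (X : R) := Rbar_le (Rbar_min (Rbar_mult 2 (ThickR n v)) (Finite (MinEdge n v))) (Finite X).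

Lemma Final_edge n v X : MinEdge n v <= X -> Final n v X.
Proof. intro. eapply Rbar_le_trans; [apply Rbar_min_r|]. simpl; auto. Qed.

Lemma Final_thick n v X r : Rbar_le (ThickR n v) (Finite r) -> 2 * r <= X -> Final n v X.
Proof.
  intros H1 H2. eapply Rbar_le_trans; [apply Rbar_min_l|].
  eapply Rbar_le_trans; [apply (Rbar_mult_le_fin 2 _ r); [lra|auto]|]. simpl; auto.
Qed.

Lemma Vpred n v k : (0 < n)%nat -> V n v (S k mod n + n - 1) = V n v k.
Proof.
  intro. apply V_eq. replace (S k mod n + n - 1)%nat with (S k mod n + (n - 1))%nat by lia.
  rewrite Nat.Div0.add_mod_idemp_l. replace (S k + (n - 1))%nat with (k + 1 * n)%nat by lia.
  apply Nat.Div0.mod_add.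
Qed.

Lemma rad_special n v m tau (rev : bool) X : polygonal_knot n v -> (m < n)%nat -> 0 <= tau <= 1 ->
  X = pnorm (if rev then padd (psub (V n v (S m)) (V n v m)) (pscal tau (psub (V n v m) (V n v (m + n - 1))))
             else padd (psub (V n v m) (V n v (m + n - 1))) (pscal tau (psub (V n v (S m)) (V n v m)))) ->
  Final n v X.
Proof.
  intros Hk Hm Ht HX. assert (Hn : (0 < n)%nat) by (destruct Hk; lia).
  assert (EV : V n v (S (m + n - 1)) = V n v m).
  { apply V_eq. replace (S (m + n - 1)) with (m + 1 * n)%nat by lia. apply Nat.Div0.mod_add. }
  assert (Ha : pdot (psub (V n v m) (V n v (m + n - 1))) (psub (V n v m) (V n v (m + n - 1))) > 0).
  { apply pdot_pos_neq. rewrite <- EV. apply knot_nondeg; auto. }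
  assert (Hb : pdot (psub (V n v (S m)) (V n v m)) (psub (V n v (S m)) (V n v m)) > 0).
  { apply pdot_pos_neq. apply knot_nondeg; auto. }
  destruct (geo_vec _ _ tau rev Ha Hb Ht) as [H|[H1 H2]]; rewrite <- HX in *.
  - apply Final_edge. eapply Rle_trans; [|apply H].
    apply Rmin_glb.
    + pose proof (MinEdge_le n v (m + n - 1) Hn). unfold edge_len at 1 in H0. rewrite EV in H0. exact H0.
    + apply (MinEdge_le n v m Hn).
  - eapply Final_thick; [|exact H2].
    eapply Rbar_le_trans; [apply Rbar_min_l|]. eapply Rbar_le_trans; [apply (MinRad_le n v m Hm)|].
    unfold Rad, turn_angle. destruct Req_EM_T as [E|E]; [contradiction|].
    unfold edge_len at 1. rewrite EV. simpl. apply Rle_refl.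
Qed.

Lemma E_mod n v k s : (0 < n)%nat -> E n v (k mod n) s = E n v k s.
Proof. intro. unfold E. rewrite V_mod. rewrite (V_eq n v (S (k mod n)) (S k)); auto. rewrite <- S_mod; auto. Qed.

Lemma E_one n v i : E n v i 1 = V n v (S i).
Proof. unfold E. destruct (V n v i) as [[a b] c]; destruct (V n v (S i)) as [[d e] f]; simpl; apply pt_eq; ring. Qed.

Lemma E_zero n v i : E n v i 0 = V n v i.
Proof. unfold E. destruct (V n v i) as [[a b] c]; destruct (V n v (S i)) as [[d e] f]; simpl; apply pt_eq; ring. Qed.

Lemma Smod_inj n i j : (i < n)%nat -> (j < n)%nat -> (S i mod n = S j mod n)%nat -> i = j.
Proof.
  intros Hi Hj H. destruct (Smod_cases n i Hi) as [[A B]|[A B]]; destruct (Smod_cases n j Hj) as [[C D]|[C D]]; lia.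
Qed.

Lemma predS n i : (0 < n)%nat -> (S ((i + n - 1) mod n) mod n = i mod n)%nat.
Proof.
  intro. rewrite <- S_mod by auto. replace (S (i + n - 1)) with (i + 1 * n)%nat by lia. apply Nat.Div0.mod_add.
Qed.

Lemma good_sym n i j : good n i j -> good n j i.
Proof. intros [A [B [C D]]]. repeat split; auto. intro H; apply D. unfold adjacent in *; tauto. Qed.

Lemma on_edge_E' n v i s : 0 <= s <= 1 -> on_edge n v i (E n v i s).
Proof. intro; exists s; split; auto. Qed.

Lemma side n v i j s y : polygonal_knot n v -> good n i j -> 0 <= s <= 1 -> on_edge n v j y ->
  (forall k sg, good n k j -> 0 <= sg <= 1 -> pdist y (E n v i s) <= pdist y (E n v k sg)) ->
  (exists t, E n v i s = gamma n v t /\ turning_param n v y t) \/ Final n v (pdist (E n v i s) y).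
Proof.
  intros Hk Hg Hs Hy Hm. pose proof Hk as [H3 _]. assert (Hn : (0 < n)%nat) by lia.
  pose proof (fun m => knot_nondeg n v m Hk) as Hnd.
  pose proof Hg as [Hi [Hj [Hij Hadj]]].
  destruct (Req_dec s 1) as [S1|S1]; [|destruct (Req_dec s 0) as [S0|S0]].
  -
    subst s. set (i' := (S i mod n)%nat). assert (Hi' : (i' < n)%nat) by (apply mod_lt; auto).
    destruct (Nat.eq_dec i' j) as [Eij|Eij].
    { exfalso. apply (knot_disj n v i j (E n v i 1) Hk Hg); [apply on_edge_E'; lra|].
      rewrite <- Eij. exists 0. split; [lra|]. rewrite <- E_form, E_zero, E_one. unfold i'. rewrite V_mod. reflexivity. }
    destruct (Nat.eq_dec j (S i' mod n)) as [Ej|Ej].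
    { right. destruct Hy as [tau [Ht ->]]. rewrite pdist_sym.
      assert (VP : V n v (j + n - 1) = V n v (S i)) by (rewrite Ej; rewrite Vpred by auto; unfold i'; apply V_mod).
      apply (rad_special n v j tau false); auto. rewrite VP.
      unfold pdist. f_equal. rewrite E_one.
      destruct (V n v (S i)) as [[a b] c]; destruct (V n v j) as [[d e] f]; destruct (V n v (S j)) as [[g h] k]; simpl; apply pt_eq; ring. }
    destruct (Nat.eq_dec i' (S j mod n)) as [Ej'|Ej'].
    { exfalso. apply Hij. apply (Smod_inj n); auto. }
    assert (Hg' : good n i' j).
    { repeat split; auto. intros [A|A]; auto. }
    left. exists (INR (S i)). split.
    + rewrite (gamma_on n v i) by (auto; rewrite S_INR; lra). f_equal. rewrite S_INR; ring.
    + apply (turning_min n v y (INR (S i)) 1 i (S i)); auto; try lra; try (rewrite S_INR; lra).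
      intros u Hu. rewrite (gamma_on n v i (INR (S i))) by (auto; rewrite S_INR; lra).
      rewrite S_INR in *. replace (INR i + 1 - INR i) with 1 by ring.
      destruct (Rle_dec u (INR i + 1)) as [U|U].
      * rewrite (gamma_on n v i u) by (auto; lra). apply Hm; auto. lra.
      * rewrite (gamma_on n v (S i) u) by (auto; rewrite S_INR; lra). rewrite <- (E_mod n v (S i)) by auto. fold i'.
        apply Hm; auto. rewrite S_INR; lra.
  -
    subst s. set (i'' := ((i + n - 1) mod n)%nat). assert (Hi'' : (i'' < n)%nat) by (apply mod_lt; auto).
    assert (VS : V n v (S i'') = V n v i) by (apply V_eq; unfold i''; rewrite predS by auto; reflexivity).
    destruct (Nat.eq_dec i'' j) as [Eij|Eij].
    { exfalso. apply (knot_disj n v i j (E n v i 0) Hk Hg); [apply on_edge_E'; lra|].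
      rewrite <- Eij. exists 1. split; [lra|]. rewrite <- E_form, E_zero, E_one. auto. }
    destruct (Nat.eq_dec j (S i'' mod n)) as [Ej|Ej].
    { exfalso. apply Hij. rewrite Ej. unfold i''. rewrite predS by auto. symmetry; apply Nat.mod_small; auto. }
    destruct (Nat.eq_dec i'' (S j mod n)) as [Ej'|Ej'].
    { right. destruct Hy as [tau [Ht ->]].
      assert (VP : V n v (i'' + n - 1) = V n v j) by (rewrite Ej'; apply Vpred; auto).
      assert (VQ : V n v i'' = V n v (S j)) by (rewrite Ej'; apply V_mod).
      apply (rad_special n v i'' (1 - tau) true); auto; try lra. rewrite VP, VS, VQ.
      unfold pdist. f_equal. rewrite E_zero.
      destruct (V n v i) as [[a b] c]; destruct (V n v j) as [[d e] f]; destruct (V n v (S j)) as [[g h] k]; simpl; apply pt_eq; ring. }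
    assert (Hg' : good n i'' j).
    { repeat split; auto. intros [A|A]; auto. }
    assert (Hin : INR (i + n - 1) + 1 = INR (i + n)).
    { rewrite <- S_INR. f_equal. lia. }
    left. exists (INR (i + n)). split.
    + rewrite (gamma_on n v (i + n)) by (auto; lra). rewrite <- (E_mod n v (i + n)) by auto.
      replace ((i + n) mod n)%nat with i. f_equal; ring.
      symmetry. replace (i + n)%nat with (i + 1 * n)%nat by lia. rewrite Nat.Div0.mod_add. apply Nat.mod_small; auto.
    + apply (turning_min n v y (INR (i + n)) 1 (i + n - 1) (i + n)); auto; try lra.
      assert (Ein : E n v (i + n) 0 = E n v i 0).
      { rewrite <- (E_mod n v (i + n)) by auto. replace ((i + n) mod n)%nat with i; auto.
        symmetry. replace (i + n)%nat with (i + 1 * n)%nat by lia. rewrite Nat.Div0.mod_add. apply Nat.mod_small; auto. }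
      intros u Hu. rewrite (gamma_on n v (i + n) (INR (i + n))) by (auto; lra).
      replace (INR (i + n) - INR (i + n)) with 0 by ring. rewrite Ein.
      destruct (Rle_dec u (INR (i + n))) as [U|U].
      * rewrite (gamma_on n v (i + n - 1) u) by (auto; lra). rewrite <- (E_mod n v (i + n - 1)) by auto. fold i''.
        apply Hm; auto. lra.
      * rewrite (gamma_on n v (i + n) u) by (auto; lra). rewrite <- (E_mod n v (i + n)) by auto.
        replace ((i + n) mod n)%nat with i.
        { apply Hm; auto. lra. }
        symmetry. replace (i + n)%nat with (i + 1 * n)%nat by lia. rewrite Nat.Div0.mod_add. apply Nat.mod_small; auto.
  -
    assert (Hs' : 0 < s < 1) by lra.
    left. exists (INR i + s). split.
    + rewrite (gamma_on n v i) by (auto; lra). f_equal; ring.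
    + apply (turning_min n v y (INR i + s) (Rmin s (1 - s)) i i); auto;
        try lra; try (unfold Rmin; destruct Rle_dec; lra).
      intros u Hu. rewrite (gamma_on n v i (INR i + s)) by (auto; lra).
      replace (INR i + s - INR i) with s by ring.
      assert (Hr : s - Rmin s (1 - s) >= 0 /\ s + Rmin s (1 - s) <= 1) by (unfold Rmin; destruct Rle_dec; lra).
      rewrite (gamma_on n v i u) by (auto; lra). apply Hm; auto. lra.
Qed.

Theorem corollary3p7 (n : nat) (v : nat -> pt) :
  polygonal_knot n v ->
  Rbar_le (Rbar_min (Rbar_mult 2 (ThickR n v)) (Finite (MinEdge n v))) (MD n v).
Proof.
  intros Hk. unfold MD.
  match goal with |- Rbar_le _ (Glb_Rbar ?S) => destruct (Glb_Rbar_correct S) as [_ Hgl] end.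
  apply Hgl. intros d [i [j [p [q [Hi [Hj [Hij [Ha [Hp [Hq ->]]]]]]]]]].
  destruct Hp as [s [Hs ->]]. destruct Hq as [t [Ht ->]].
  assert (Hg : good n i j) by (repeat split; auto).
  destruct (gmin n v Hk) as [[[[i0 j0] s0] t0] [[Hg0 [Hs0 Ht0]] Hmin]].
  { exists i, j, s, t. exact (conj Hg (conj Hs Ht)). }
  assert (Hd : pdist (E n v i0 s0) (E n v j0 t0) <= pdist (E n v i s) (E n v j t)).
  { apply (Hmin i j s t). exact (conj Hg (conj Hs Ht)). }
  apply Rbar_le_trans with (Finite (pdist (E n v i0 s0) (E n v j0 t0))); [|simpl; exact Hd].
  fold (Final n v (pdist (E n v i0 s0) (E n v j0 t0))).
  set (x := E n v i0 s0). set (y := E n v j0 t0).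
  destruct (side n v i0 j0 s0 y Hk Hg0 Hs0 (on_edge_E' n v j0 t0 Ht0)) as [[tx [Hx Tx]]|F]; auto.
  { intros k sg Hgk Hsg. rewrite !(pdist_sym y). apply (Hmin k j0 sg t0). exact (conj Hgk (conj Hsg Ht0)). }
  destruct (side n v j0 i0 t0 x Hk (good_sym _ _ _ Hg0) Ht0 (on_edge_E' n v i0 s0 Hs0)) as [[ty [Hy Ty]]|F].
  { intros k sg Hgk Hsg. apply (Hmin i0 k s0 sg). exact (conj (good_sym _ _ _ Hgk) (conj Hs0 Hsg)). }
  2: { rewrite pdist_sym. exact F. }
  assert (Hxy : x <> y).
  { intro E0. apply (knot_disj n v i0 j0 x Hk Hg0); [apply on_edge_E'; auto|]. rewrite E0. apply on_edge_E'; auto. }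
  assert (Hdc : Rbar_le (dcsd n v) (Finite (pdist x y))).
  { unfold dcsd. match goal with |- Rbar_le (Glb_Rbar ?S) _ => destruct (Glb_Rbar_correct S) as [Hlb _] end.
    apply Hlb. exists x, y. repeat split; auto.
    - exists tx; split; auto.
    - exists ty; split; auto. }
  apply (Final_thick n v _ (/ 2 * pdist x y)); [|lra].
  unfold ThickR. eapply Rbar_le_trans; [apply Rbar_min_r|]. apply Rbar_mult_le_fin; auto. lra.
Qed.
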